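(* Let $q$ be a prime power, $r\ge 1$ an integer, and $\mathcal{S}$ a $q^r$-divisible spanning set of $q^{r+1}$ points in $\mathrm{PG}(v-1,q)$. Then the number of hyperplanes $H$ with $\mathcal{S}\cap H=\emptyset$ is at most $\left(q^{v-r-1}-q+2\right)/2$.
   Context: $\mathrm{PG}(v-1,q)$ is the projective space of $\mathbb{F}_q^v$; points are $1$-dimensional and hyperplanes $(v-1)$-dimensional subspaces of $\mathbb{F}_q^v$. A set $\mathcal{S}$ of points is spanning if its points span $\mathbb{F}_q^v$, and it is $q^r$-divisible if $|\mathcal{S}\cap H|\equiv|\mathcal{S}|\pmod{q^r}$ for every hyperplane $H$. *)

(* Defs.v *)
From HB Require Import structures.
From mathcomp Require Import all_boot all_order all_algebra all_field.
Set Implicit Arguments. Unset Strict Implicit. Unset Printing Implicit Defensive.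
Import Order.TTheory GRing.Theory Num.Theory.

(* A subspace of F^v is represented
   by its set of vectors: X is (the vector set of) a k-dimensional subspace iff
   X equals the set of vectors of its own span and that span has dimension k. *)
Definition is_subspace_dim (F : finFieldType) (v k : nat)
    (X : {set 'rV[F]_v}) : bool :=
  (X == [set x | x \in << enum X >>%VS]) && (\dim << enum X >>%VS == k).

Definition is_point (F : finFieldType) (v : nat) (P : {set 'rV[F]_v}) : bool :=
  is_subspace_dim 1 P.

Definition is_hyperplane (F : finFieldType) (v : nat) (H : {set 'rV[F]_v}) : bool :=
  is_subspace_dim v.-1 H.

Definition points_in (F : finFieldType) (v : nat)
    (S : {set {set 'rV[F]_v}}) (H : {set 'rV[F]_v}) : {set {set 'rV[F]_v}} :=
  [set P in S | P \subset H].

Definition spanning (F : finFieldType) (v : nat) (S : {set {set 'rV[F]_v}}) : Prop :=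
  (<< enum (\bigcup_(P in S) P) >>%VS = fullv).

Definition divisible (F : finFieldType) (v : nat) (S : {set {set 'rV[F]_v}})
    (r : nat) : Prop :=
  forall H : {set 'rV[F]_v}, is_hyperplane H ->
    #|points_in S H| = #|S| %[mod #|F| ^ r].

Definition n_disjoint_hyperplanes (F : finFieldType) (v : nat)
    (S : {set {set 'rV[F]_v}}) : nat :=
  #|[set H : {set 'rV[F]_v} | is_hyperplane H && (points_in S H == set0)]|.

(* Main.v *)
Require Import Defs.
From mathcomp Require Import all_boot all_order all_algebra all_field.
From mathcomp Require Import ring lra zify.
Set Implicit Arguments. Unset Strict Implicit. Unset Printing Implicit Defensive.
Import Order.TTheory GRing.Theory Num.Theory.
Local Open Scope ring_scope.


Section Count.
Variable F : finFieldType.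

Lemma fiber_card (v k : nat) (B : 'M[F]_(k, v)) :
  (forall c : 'rV_k, c *m B = 0 -> c = 0) ->
  (#|[set u : 'rV[F]_v | B *m u^T == 0%R]| * #|F| ^ k = #|F| ^ v)%N.
Proof.
move=> Hc.
have rf : row_free B.
  rewrite -kermx_eq0; apply/negPn/negP => /rowV0Pn [c /sub_kermxP cB cn0].
  by move: cn0; rewrite (Hc _ cB) eqxx.
case/row_freeP: rf => C BC.
pose g (u : 'rV[F]_v) := B *m u^T.
have fib : forall y : 'cV[F]_k,
    #|[set u : 'rV[F]_v | g u == y]| = #|[set u : 'rV[F]_v | B *m u^T == 0%R]|.
  move=> y; pose w := (C *m y)^T.
  rewrite -(card_imset [set u : 'rV[F]_v | B *m u^T == 0%R] (addIr w)); apply: eq_card => x.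
  rewrite [in LHS]inE; apply/eqP/imsetP => [gx | [u]].
    exists (x - w); last by rewrite subrK.
    by rewrite inE linearB /= mulmxBr -/(g x) gx trmxK mulmxA BC mul1mx subrr.
  rewrite inE => /eqP u0 ->.
  by rewrite /g linearD /= mulmxDr u0 add0r trmxK mulmxA BC mul1mx.
have : (\sum_(y : 'cV[F]_k) #|[set u : 'rV[F]_v | g u == y]| = #|F| ^ v)%N.
  have -> : (#|F| ^ v = #|{: 'rV[F]_v}|)%N by rewrite card_mx mul1n.
  rewrite (eq_bigr (fun y => (\sum_(u : 'rV[F]_v) nat_of_bool (g u == y))%N)); last first.
    by move=> y _; rewrite -sum1_card big_mkcond /=; apply: eq_bigr => u _; rewrite inE; case: (g u == y).
  rewrite exchange_big /= -sum1_card; apply: eq_bigr => u _.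
  by rewrite (bigD1 (g u)) //= eqxx big1 ?addn0 // => y /negPf; rewrite eq_sym => ->.
rewrite (eq_bigr _ (fun y _ => fib y)) sum_nat_const card_mx muln1 mulnC => <-.
by [].
Qed.
End Count.

Section Geo.
Variables (F : finFieldType) (v : nat).
Implicit Types (u x p : 'rV[F]_v).

Definition K u : {set 'rV[F]_v} := [set x | x *m u^T == 0].
Definition Kv u : {vspace 'rV[F]_v} := lker (linfun (mulmxr u^T)).

Lemma KE u : K u = [set x | x \in Kv u].
Proof. by apply/setP => x; rewrite !inE memv_ker lfunE. Qed.

Lemma span_set (W : {vspace 'rV[F]_v}) : <<enum [set x | x \in W]>>%VS = W.
Proof.
apply/eqP; rewrite eqEsubv; apply/andP; split.
  by apply/span_subvP => x; rewrite mem_enum inE.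
by apply/subvP => x xW; apply: memv_span; rewrite mem_enum inE.
Qed.

Lemma tr_eq0 x u : (x *m u^T == 0) = (u *m x^T == 0).
Proof.
by rewrite -(inj_eq (@trmx_inj _ _ _)) trmx_mul trmxK trmx0.
Qed.

Lemma point_gen (P : {set 'rV[F]_v}) :
  is_point P -> exists2 p, p != 0 & P = [set x : 'rV[F]_v | x \in <[p]>%VS].
Proof.
rewrite /is_point /is_subspace_dim => /andP [/eqP PE dW].
set W := <<enum P>>%VS in PE dW.
have W0 : W != 0%VS by apply/eqP => W0; move: dW; rewrite W0 dimv0.
exists (vpick W); first by rewrite vpick0.
rewrite PE; suff E : W = <[vpick W]>%VS by rewrite {1}E.
apply/esym/eqP.
have sub : (<[vpick W]> <= W)%VS by rewrite -memvE memv_pick.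
move: (dimv_leqif_eq sub) => [_ <-].
by rewrite dim_vline vpick0 W0 (eqP dW).
Qed.

Lemma sub_K p u :
  ([set x : 'rV[F]_v | x \in <[p]>%VS] \subset K u) = (p *m u^T == 0).
Proof.
apply/subsetP/idP => [H | H x].
  by have := H p; rewrite !inE memv_line => /(_ isT).
rewrite !inE => /vlineP [c ->]; by rewrite -scalemxAl (eqP H) scaler0.
Qed.

Lemma card_K u : u != 0 -> (#|K u| * #|F| = #|F| ^ v)%N.
Proof.
move=> un0.
have hc : forall c : 'rV[F]_1, c *m u = 0 -> c = 0.
  move=> c cu; apply/rowP => i; rewrite (ord1 i) mxE.
  move: cu; rewrite {1}(mx11_scalar c) mul_scalar_mx => /eqP.
  by rewrite scaler_eq0 (negPf un0) orbF => /eqP.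
have := @fiber_card F v 1 u hc; rewrite expn1 => <-.
by congr (_ * _)%N; apply: eq_card => x; rewrite !inE tr_eq0.
Qed.

Lemma dim_Kv u : u != 0 -> \dim (Kv u) = v.-1.
Proof.
move=> un0; have := card_K un0.
have -> : #|K u| = #|Kv u| by rewrite KE; apply: eq_card => x; rewrite inE.
rewrite card_vspace => /eqP; rewrite -expnSr eqn_exp2l ?finRing_gt1 // => /eqP H.
by rewrite -[in RHS]H.
Qed.

Lemma K_hyper u : u != 0 -> is_hyperplane (K u).
Proof.
move=> un0; rewrite /is_hyperplane /is_subspace_dim KE span_set eqxx /=.
by rewrite dim_Kv.
Qed.

End Geo.

Section Geo2.
Variables (F : finFieldType) (v : nat).
Implicit Types (u x p : 'rV[F]_v).

Lemma line_eq p p' : p != 0 -> p' \in <[p]>%VS -> p' != 0 -> <[p']>%VS = <[p]>%VS.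
Proof.
move=> pn0 pp p'n0; apply/eqP.
have sub : (<[p']> <= <[p]>)%VS by rewrite -memvE.
move: (dimv_leqif_eq sub) => [_ <-].
by rewrite !dim_vline pn0 p'n0.
Qed.

Lemma two_points p p' : p != 0 -> p' != 0 ->
  [set x : 'rV[F]_v | x \in <[p]>%VS] != [set x : 'rV[F]_v | x \in <[p']>%VS] ->
  (#|[set u : 'rV[F]_v | col_mx p p' *m u^T == 0%R]| * #|F| ^ 2 = #|F| ^ v)%N.
Proof.
move=> pn0 p'n0 neq; apply: (@fiber_card F v (1 + 1)) => c.
rewrite -[c]hsubmxK mul_row_col.
rewrite {1}(mx11_scalar (lsubmx c)) {1}(mx11_scalar (rsubmx c)) !mul_scalar_mx.
set a := lsubmx c 0 0; set b := rsubmx c 0 0 => E.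
have b0 : b = 0.
  apply/eqP; apply/negP => /negP bn0; move: neq; rewrite (line_eq pn0 _ p'n0) ?eqxx //.
  apply/vlineP; exists (- (a / b)).
  have E2 : b *: p' = - (a *: p) by apply/eqP; rewrite -addr_eq0 addrC E.
  rewrite -[p'](scale1r) -(mulVf bn0) -scalerA E2 scalerN scalerA.
  by rewrite scaleNr mulrC.
have a0 : a = 0.
  move: E; rewrite b0 scale0r addr0 => /eqP; rewrite scaler_eq0 (negPf pn0) orbF.
  by move/eqP.
by rewrite (mx11_scalar (lsubmx c)) (mx11_scalar (rsubmx c)) -/a -/b a0 b0 !raddf0 row_mx0.
Qed.

Lemma hyper_K (H : {set 'rV[F]_v}) : (0 < v)%N -> is_hyperplane H ->
  exists2 u, u != 0 & H = K u.
Proof.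
move=> v0; rewrite /is_hyperplane /is_subspace_dim => /andP [/eqP HE dW].
set W := <<enum H>>%VS in HE dW.
pose B := \matrix_(i < \dim W) (vbasis W)`_i.
have hc : forall c : 'rV[F]_(\dim W), c *m B = 0 -> c = 0.
  move=> c cB; apply/rowP => i; rewrite mxE.
  have fr := basis_free (vbasisP W).
  move/freeP: fr => /(_ (fun j => c 0 j)); apply => //.
  transitivity (c *m B); last exact: cB.
  by rewrite mulmx_sum_row; apply: eq_bigr => j _; rewrite rowK.
have := fiber_card hc.
set N := #|_| => HN; move: HN; rewrite (eqP dW) => HN.
have NE : N = #|F|.
  have q0 : (0 < #|F| ^ v.-1)%N by rewrite expn_gt0 ltnW // finRing_gt1.
  apply/eqP; rewrite -(@eqn_pmul2r (#|F| ^ v.-1)) //.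
  by rewrite HN -expnS prednK.
have : (1 < N)%N by rewrite NE finRing_gt1.
case/card_gt1P => [x [y [xX yX xy]]].
have [u [uX un0]] : exists u, u \in [set u : 'rV[F]_v | B *m u^T == 0%R] /\ u != 0.
  case: (eqVneq x 0) => [x0|xn0]; last by exists x.
  by exists y; split => //; rewrite -x0 eq_sym.
exists u => //.
rewrite KE HE; suff -> : W = Kv u by [].
have sub : (W <= Kv u)%VS.
  rewrite -(eqP (andP (vbasisP W)).1); apply/span_subvP => z /tnthP [i ->].
  rewrite memv_ker lfunE /= (tnth_nth 0).
  move: uX; rewrite inE => /eqP /(congr1 (row i)); rewrite row_mul rowK row0 => ->.
  by [].
apply/eqP; move: (dimv_leqif_eq sub) => [_ <-].
by rewrite dim_Kv // (eqP dW).
Qed.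
End Geo2.

Section Main.
Variables (F : finFieldType) (v : nat) (S : {set {set 'rV[F]_v}}).
Hypothesis HS : forall P, P \in S -> is_point P.

Definition gen (P : {set 'rV[F]_v}) := vpick <<enum P>>%VS.

Lemma genP P : P \in S -> gen P != 0 /\ P = [set x : 'rV[F]_v | x \in <[gen P]>%VS].
Proof.
move/HS; rewrite /is_point /is_subspace_dim => /andP [/eqP PE dW].
rewrite /gen; set W := <<enum P>>%VS in PE dW *.
have W0 : W != 0%VS by apply/eqP => W0; move: dW; rewrite W0 dimv0.
split; first by rewrite vpick0.
rewrite {1}PE; suff E : W = <[vpick W]>%VS by rewrite {1}E.
apply/esym/eqP.
have sub : (<[vpick W]> <= W)%VS by rewrite -memvE memv_pick.
move: (dimv_leqif_eq sub) => [_ <-].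
by rewrite dim_vline vpick0 W0 (eqP dW).
Qed.

Definition a (u : 'rV[F]_v) := #|points_in S (K u)|.

Lemma aE u : a u = (\sum_(P in S) nat_of_bool (gen P *m u^T == 0%R))%N.
Proof.
rewrite /a /points_in -sum1_card big_mkcond [RHS]big_mkcond /=.
apply: eq_bigr => P _; rewrite inE; case PS: (P \in S) => //=.
by have [_ {1}->] := genP PS; rewrite sub_K; case: (_ == 0).
Qed.


Lemma sum_bool (T : finType) (b : pred T) :
  (\sum_t nat_of_bool (b t) = #|[set t | b t]|)%N.
Proof. by rewrite -sum1_card [RHS]big_mkcond; apply: eq_bigr => t _; rewrite inE; case: (b t). Qed.

Lemma count1 (p : 'rV[F]_v) : p != 0 ->
  (0 < v)%N /\ #|[set u : 'rV[F]_v | p *m u^T == 0%R]| = (#|F| ^ v.-1)%N.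
Proof.
move=> pn0.
have v0 : (0 < v)%N.
  case: {+}v p pn0 => // p; by rewrite [p]thinmx0 eqxx. 
split => //.
have := card_K pn0.
have -> : #|K p| = #|[set u : 'rV[F]_v | p *m u^T == 0%R]|.
  by apply: eq_card => x; rewrite !inE tr_eq0.
move=> HN; apply/eqP; rewrite -(@eqn_pmul2r #|F|) ?(ltnW (finRing_gt1 F)) //.
by rewrite HN -expnSr prednK.
Qed.

Lemma sum_a : (\sum_u a u = #|S| * #|F| ^ v.-1)%N.
Proof.
rewrite (eq_bigr _ (fun u _ => aE u)) exchange_big /=.
rewrite -sum1_card big_distrl /=; apply: eq_bigr => P PS.
by rewrite sum_bool mul1n (count1 (genP PS).1).2.
Qed.


Lemma count2 P Q : P \in S -> Q \in S -> P != Q ->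
  (1 < v)%N /\ #|[set u : 'rV[F]_v | (gen P *m u^T == 0%R) && (gen Q *m u^T == 0%R)]| = (#|F| ^ v.-2)%N.
Proof.
move=> PS QS PQ.
have [pn0 PE] := genP PS; have [qn0 QE] := genP QS.
have PQ' : [set x : 'rV[F]_v | x \in <[gen P]>%VS] != [set x : 'rV[F]_v | x \in <[gen Q]>%VS].
  by rewrite -PE -QE.
have := two_points pn0 qn0 PQ'.
have -> : #|[set u : 'rV[F]_v | col_mx (gen P) (gen Q) *m u^T == 0%R]| =
   #|[set u : 'rV[F]_v | (gen P *m u^T == 0%R) && (gen Q *m u^T == 0%R)]|.
  by apply: eq_card => u; rewrite !inE mul_col_mx col_mx_eq0.
set N := #|_| => HN.
have q1 := finRing_gt1 F.
have N0 : (0 < N)%N by apply/card_gt0P; exists 0; rewrite inE trmx0 !mulmx0 eqxx.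
have v2 : (1 < v)%N.
  rewrite -(@leq_exp2l #|F|) // -HN leq_pmull //.
split => //.
apply/eqP; rewrite -(@eqn_pmul2r (#|F| ^ 2)) ?expn_gt0 ?(ltnW q1) //.
by rewrite HN -expnD -subn2 subnK.
Qed.

Lemma sum_a2 : (1 < #|S|)%N ->
  (1 < v)%N /\ (\sum_u a u ^ 2 = #|S| * (#|F| ^ v.-1 + (#|S|.-1) * #|F| ^ v.-2))%N.
Proof.
move=> S2.
have v2 : (1 < v)%N.
  case/card_gt1P: S2 => P [Q [PS QS PQ]]; exact: (count2 PS QS PQ).1.
split => //.
rewrite (eq_bigr (fun u => \sum_(P in S) \sum_(Q in S)
    nat_of_bool ((gen P *m u^T == 0%R) && (gen Q *m u^T == 0%R)))%N); last first.
  move=> u _; rewrite aE expnS expn1 big_distrl /=; apply: eq_bigr => P _.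
  rewrite big_distrr /=; apply: eq_bigr => Q _; by rewrite mulnb.
rewrite exchange_big /= -sum_nat_const; apply: eq_bigr => P PS.
rewrite exchange_big /= (bigD1 P) //= sum_bool.
rewrite (eq_bigr (fun _ => #|F| ^ v.-2)%N); last first.
  move=> Q /andP [QS QP]; rewrite sum_bool.
  have PQ : P != Q by rewrite eq_sym.
  exact: (count2 PS QS PQ).2.
rewrite sum_nat_const.
have -> : #|[set t : 'rV[F]_v | (gen P *m t^T == 0%R) && (gen P *m t^T == 0%R)]| = (#|F| ^ v.-1)%N.
  rewrite -(count1 (genP PS).1).2; by apply: eq_card => u; rewrite !inE andbb.
rewrite (cardD1 P S) PS /= add0n; congr (_ + _ * _)%N.
by apply: eq_card => Q; rewrite !inE andbC.
Qed.


Lemma a0 : a 0 = #|S|.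
Proof.
rewrite /a; suff -> : points_in S (K 0) = S by []; apply/setP => P; rewrite !inE.
case PS: (P \in S) => //=; apply/subsetP => x _; by rewrite inE trmx0 mulmx0.
Qed.

Lemma K_scale c (u : 'rV[F]_v) : c != 0 -> K (c *: u) = K u.
Proof.
move=> cn0; apply/setP => x; rewrite !inE linearZ /= -scalemxAr scaler_eq0 (negPf cn0).
by [].
Qed.

Definition pu (H : {set 'rV[F]_v}) := odflt 0 [pick u | (u != 0) && (K u == H)].

Lemma puP H : (0 < v)%N -> is_hyperplane H -> pu H != 0 /\ K (pu H) = H.
Proof.
move=> v0 hH; rewrite /pu; case: pickP => [u /andP [un0 /eqP KH] | none] //=.
have [u un0 HE] := hyper_K v0 hH.
by move: (none u); rewrite un0 HE eqxx.
Qed.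

Lemma hyp_count : (0 < v)%N ->
  ((#|F|.-1) * n_disjoint_hyperplanes S <= #|[set u : 'rV[F]_v | (u != 0%R) && (a u == 0%N)]|)%N.
Proof.
move=> v0.
set D := [set H : {set 'rV[F]_v} | is_hyperplane H && (points_in S H == set0)].
pose f (Hc : {set 'rV[F]_v} * F) := Hc.2 *: pu Hc.1.
have cardC : #|[set~ (0 : F)]| = #|F|.-1 by rewrite cardsC1.
rewrite /n_disjoint_hyperplanes -/D mulnC -cardC -cardsX -(card_in_imset (f := f)).
  apply: subset_leq_card; apply/subsetP => _ /imsetP [[H c] /setXP [HD cD] ->].
  move: HD cD; rewrite !inE /f /= => /andP [hH /eqP e0] cn0.
  have [pn0 KH] := puP v0 hH.
  rewrite scaler_eq0 negb_or cn0 pn0 /= /a K_scale // KH e0 cards0 //.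
move=> [H c] [H' c'] /setXP [HD cD] /setXP [HD' cD'].
move: HD cD HD' cD'; rewrite !inE /f /= => /andP [hH _] cn0 /andP [hH' _] cn0' E.
have [pn0 KH] := puP v0 hH; have [pn0' KH'] := puP v0 hH'.
have HH : H = H' by rewrite -[LHS]KH -[RHS]KH' -(K_scale (pu H) cn0) -(K_scale (pu H') cn0') E.
move: E; rewrite -HH => /eqP; rewrite -subr_eq0 -scalerBl scaler_eq0 (negPf pn0) orbF subr_eq0.
by move/eqP ->.
Qed.

End Main.

Lemma fnonneg (i : nat) : 0 <= (i%:Q - 1) * (i%:Q - 2).
Proof.
case: i => [|[|i]]; first by [].
  by rewrite subrr mul0r.
have h : (2%:R : rat) <= i.+2%:R by rewrite ler_nat.
apply: mulr_ge0; rewrite subr_ge0; lra.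
Qed.

Lemma count_cond (T : finType) (A b : pred T) :
  (\sum_(t | A t) nat_of_bool (b t) = #|[set t | A t && b t]|)%N.
Proof.
rewrite -sum1_card [RHS]big_mkcond [LHS]big_mkcond; apply: eq_bigr => t _; rewrite inE.
by case: (A t); case: (b t).
Qed.

Unset Implicit Arguments.
Theorem mainTheorem3 (F : finFieldType) (v r : nat)
    (S : {set {set 'rV[F]_v}}) :
  (1 <= r)%N ->
  (forall P, P \in S -> is_point P) ->
  spanning S ->
  divisible S r ->
  #|S| = (#|F| ^ r.+1)%N ->
  (n_disjoint_hyperplanes S)%:Q
    <= ((#|F|%:Q) ^ (v%:Z - r%:Z - 1) - #|F|%:Q + 2) / 2.
Proof.
move=> r1 HS _ Hdiv Sn.
set q := #|F|.
have q1 : (1 < q)%N by apply: finRing_gt1.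
have S2 : (1 < #|S|)%N.
  by rewrite Sn (leq_trans q1) // -{1}(expn1 q) leq_pexp2l // ltnW.
have [v2 sa2] := sum_a2 HS S2.
have sa := sum_a HS.
have v0 : (0 < v)%N by apply: ltnW.
have hc := @hyp_count _ _ S v0.
set N0 := #|_| in hc.
set Dn := n_disjoint_hyperplanes S in hc *.
have adiv : forall u : 'rV[F]_v, u != 0 -> (q ^ r %| a S u)%N.
  move=> u un0; have := Hdiv _ (K_hyper un0); rewrite -/(a S u) Sn.
  by rewrite expnSr modnMr /dvdn => ->.
set Q := q%:Q; set R := Q ^+ r.
pose f (x : rat) := (x - R) * (x - 2 * R).
have fpos : forall u : 'rV[F]_v, u != 0 ->
    2 * R ^+ 2 * (a S u == 0%N)%:R <= f (a S u)%:R.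
  move=> u un0; have := divnK (adiv u un0); set i := (_ %/ _)%N => ai.
  case: eqP => [->|_].
    by rewrite /f /= mulr1 le_eqVlt; apply/orP; left; apply/eqP; ring.
  rewrite mulr0 -ai natrM natrX -/Q -/R.
  have -> : f (i%:R * R) = R ^+ 2 * ((i%:Q - 1) * (i%:Q - 2)) by rewrite /f; ring.
  by apply: mulr_ge0; [rewrite exprn_ge0 // exprn_ge0 // ler0n | apply: fnonneg].
have sumf : \sum_(u : 'rV[F]_v) f (a S u)%:R =
    (\sum_u a S u ^ 2)%N%:R - 3 * R * (\sum_u a S u)%N%:R + 2 * R ^+ 2 * (q ^ v)%N%:R.
  rewrite (eq_bigr (fun u => (a S u ^ 2)%N%:R + (- (3 * R) * (a S u)%:R + 2 * R ^+ 2))); last first.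
    by move=> u _; rewrite /f natrX; ring.
  rewrite !big_split /= -mulr_sumr sumr_const card_mx mul1n !natr_sum.
  rewrite -/q; ring.
have lowf : f #|S|%:R + 2 * R ^+ 2 * N0%:R <= \sum_(u : 'rV[F]_v) f (a S u)%:R.
  rewrite (bigD1 0) //= a0; rewrite lerD2l.
  have -> : N0 = (\sum_(u : 'rV[F]_v | u != 0%R) nat_of_bool (a S u == 0%N))%N.
    by rewrite count_cond.
  rewrite natr_sum mulr_sumr; apply: ler_sum => u un0; exact: fpos.
have QE : Q = q%:R by rewrite /Q pmulrn.
have Q0 : 0 < Q by rewrite QE ltr0n ltnW.
have Q1 : 1 < Q by rewrite QE ltr1n.
set X := Q ^+ (v.-2).
set T := Q ^ (v%:Z - r%:Z - 1).
have vE : v = (v.-2).+2 by rewrite -subn2 -addn2 subnK.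
have TX : R * T = Q * X.
  have -> : R = Q ^ (r%:Z) by [].
  rewrite /T -expfzDr ?gt_eqF //.
  have -> : (r%:Z + (v%:Z - r%:Z - 1)) = ((v.-2).+1)%:Z by lia.
  by change (Q ^+ (v.-2).+1 = Q * X); rewrite exprS.
have nS : #|S|%:R = Q * R by rewrite Sn natrX -QE exprS.
have S0 : (0 < #|S|)%N by apply: ltnW.
have nS1 : (#|S|.-1)%:R = Q * R - 1 :> rat.
  rewrite -nS; case: #|S| S0 => // n _; by rewrite /= -addn1 natrD addrK.
have qv : (q ^ v)%:R = Q * (Q * X) :> rat by rewrite natrX -QE {1}vE !exprS.
have q1v : (#|F| ^ v.-1)%:R = Q * X :> rat.
  by rewrite natrX -QE {1}vE /= exprS.
have sa' : (\sum_u a S u)%N%:R = Q * R * (Q * X) :> rat.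
  by rewrite sa natrM nS q1v.
have sa2' : (\sum_u a S u ^ 2)%N%:R = Q * R * (Q * X + (Q * R - 1) * X) :> rat.
  by rewrite sa2 natrM natrD natrM nS nS1 q1v natrX -QE.
rewrite sumf sa' sa2' qv nS in lowf.
have key : 2 * R ^+ 2 * N0%:R <= R ^+ 2 * (Q - 1) * (T - Q + 2).
  have E : Q * R * (Q * X + (Q * R - 1) * X) - 3 * R * (Q * R * (Q * X)) +
      2 * R ^+ 2 * (Q * (Q * X)) - f (Q * R) =
      R ^+ 2 * (Q - 1) * (T - Q + 2) + R * (Q - 1) * (Q * X - R * T).
    by rewrite /f; ring.
  rewrite TX subrr mulr0 addr0 in E.
  by rewrite -E lerBrDl.
have hc' : (Q - 1) * Dn%:R <= N0%:R.
  have : ((q.-1 * Dn)%N%:R <= N0%:R :> rat) by rewrite ler_nat.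
  by rewrite natrM -subn1 natrB ?(ltnW q1) // -QE.
have R0 : 0 < R by rewrite exprn_gt0.
have c0 : 0 < R ^+ 2 * (Q - 1) by rewrite mulr_gt0 ?exprn_gt0 // subr_gt0.
rewrite pmulrn ler_pdivlMr //.
rewrite -(ler_pM2l c0).
apply: le_trans key.
have : R ^+ 2 * (Q - 1) * (Dn%:R * 2) = 2 * R ^+ 2 * ((Q - 1) * Dn%:R) by ring.
move=> ->; rewrite ler_pM2l //; by rewrite mulr_gt0 ?exprn_gt0.
Qed.
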